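(* Let $n$ be a positive integer and $N=n^2+1$. Then for every integer $0\le k\le n$, $$(\Delta^k\delta_e,\delta_e)_{\ell^2(H)}=(\Delta_N^k\delta_e,\delta_e)_{\ell^2(H_N)}.$$
   Context: $H$ is the discrete Heisenberg group of $3\times3$ upper unitriangular integer matrices $\begin{pmatrix}1&k&m\\0&1&\ell\\0&0&1\end{pmatrix}$, $k,\ell,m\in\mathbb Z$; for $N\ge2$, $H_N$ is the analogous group with entries in $\mathbb Z/N\mathbb Z$. In both groups $x$ is the matrix with $k=1,\ell=m=0$ and $y$ the matrix with $\ell=1,k=m=0$. $\Delta=\frac14(x+x^{-1}+y+y^{-1})$ is the Laplace operator, an element of the group algebra of $H$ acting on $\ell^2(H)$ via the left regular representation; likewise $\Delta_N=\frac14(x+x^{-1}+y+y^{-1})$ acts on $\ell^2(H_N)$. $\delta_e$ denotes the indicator function of the identity element in the respective group. *)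

(* Defs.v *)
From mathcomp Require Import all_boot all_order all_algebra.
Set Implicit Arguments. Unset Strict Implicit. Unset Printing Implicit Defensive.
Import Order.TTheory GRing.Theory Num.Theory.
Local Open Scope ring_scope.

(* Heisenberg group over a commutative ring A: the unitriangular matrix
   [[1,k,m],[0,1,l],[0,0,1]] is encoded as the triple (k, l, m). *)
Definition heis (A : Type) := (A * A * A)%type.

Section Heis.
Variable A : comRingType.

Definition hmul (g h : heis A) : heis A :=
  let: (k, l, m) := g in let: (k', l', m') := h in
  (k + k', l + l', m + m' + k * l').

Definition hinv (g : heis A) : heis A :=
  let: (k, l, m) := g in (- k, - l, - m + k * l).

Definition he : heis A := (0, 0, 0).
Definition hx : heis A := (1, 0, 0).
Definition hy : heis A := (0, 1, 0).

Variable R : numFieldType.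

Definition lreg (g : heis A) (f : heis A -> R) : heis A -> R :=
  fun h => f (hmul (hinv g) h).

Definition lap (f : heis A -> R) : heis A -> R :=
  fun h => 4%:R^-1 * (lreg hx f h + lreg (hinv hx) f h
                      + lreg hy f h + lreg (hinv hy) f h).

End Heis.

Definition delta_e (A : comRingType) (R : numFieldType) : heis A -> R :=
  fun h => if h == he A then 1 else 0.

Definition ip_fin (A : finComRingType) (R : numFieldType)
  (f g : heis A -> R) : R := \sum_(h : heis A) f h * g h.

(* l^2(H) inner product against delta_e:  sum_h f(h) delta_e(h) = f(e)
   (delta_e has singleton support, so the series reduces to one term). *)
Definition ip_delta_e_int (R : numFieldType) (f : heis int -> R) : R :=
  f (he int).

(* Main.v *)
Require Import Defs.
From mathcomp Require Import all_boot all_order all_algebra.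
From mathcomp Require Import zify.
Set Implicit Arguments. Unset Strict Implicit. Unset Printing Implicit Defensive.
Import Order.TTheory GRing.Theory Num.Theory.
Local Open Scope ring_scope.

Section Proof.
Variable N : nat.
Local Notation ZN := 'Z_N.

Definition phi (g : heis int) : heis ZN :=
  let: (a, b, c) := g in (a%:~R, b%:~R, c%:~R).

Lemma phi_mul g h : phi (hmul g h) = hmul (phi g) (phi h).
Proof. by case: g => [[a b] c]; case: h => [[a' b'] c'] /=; rewrite !intrD intrM. Qed.

Lemma phi_inv g : phi (hinv g) = hinv (phi g).
Proof. by case: g => [[a b] c] /=; rewrite intrD !intrN intrM. Qed.

Lemma phi_hx : phi (hx int) = hx ZN.
Proof. by []. Qed.
Lemma phi_hy : phi (hy int) = hy ZN.
Proof. by []. Qed.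
Lemma phi_he : phi (he int) = he ZN.
Proof. by []. Qed.

Variable R : numFieldType.

Lemma pullback k (g : heis ZN -> R) h :
  iter k (@lap ZN R) g (phi h) = iter k (@lap int R) (fun x => g (phi x)) h.
Proof.
elim: k h => [|k IH] h //=.
have E : forall s, hmul (hinv (phi s)) (phi h) = phi (hmul (hinv s) h).
  by move=> s; rewrite phi_mul phi_inv.
have E1 : hmul (hinv (hx ZN)) (phi h) = phi (hmul (hinv (hx int)) h).
  by rewrite -E.
have E2 : hmul (hinv (hinv (hx ZN))) (phi h) = phi (hmul (hinv (hinv (hx int))) h).
  by rewrite -E phi_inv.
have E3 : hmul (hinv (hy ZN)) (phi h) = phi (hmul (hinv (hy int)) h).
  by rewrite -E.
have E4 : hmul (hinv (hinv (hy ZN))) (phi h) = phi (hmul (hinv (hinv (hy int))) h).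
  by rewrite -E phi_inv.
rewrite [LHS]/lap /lreg E1 E2 E3 E4 !IH.
by rewrite /lap /lreg.
Qed.
End Proof.

Fixpoint reach (j : nat) (h h' : heis int) : Prop :=
  match j with
  | 0 => h' = h
  | j.+1 => reach j (hmul (hinv (hx int)) h) h'
         \/ reach j (hmul (hinv (hinv (hx int))) h) h'
         \/ reach j (hmul (hinv (hy int)) h) h'
         \/ reach j (hmul (hinv (hinv (hy int))) h) h'
  end.

Lemma locality (R : numFieldType) k (f g : heis int -> R) h :
  (forall h', reach k h h' -> f h' = g h') ->
  iter k (@lap int R) f h = iter k (@lap int R) g h.
Proof.
elim: k h => [|k IH] h /= Hfg; first by apply: Hfg.
rewrite /lap /lreg.
rewrite (IH _ (fun h' H => Hfg h' (or_introl H))).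
rewrite (IH _ (fun h' H => Hfg h' (or_intror (or_introl H)))).
rewrite (IH _ (fun h' H => Hfg h' (or_intror (or_intror (or_introl H))))).
by rewrite (IH _ (fun h' H => Hfg h' (or_intror (or_intror (or_intror H))))).
Qed.

Definition bnd (i : nat) (h : heis int) : Prop :=
  let: (a, b, c) := h in
  [/\ - (i%:Z) <= a <= i%:Z, - (i%:Z) <= b <= i%:Z & - (i%:Z * i%:Z) <= c <= i%:Z * i%:Z].

Lemma reach_bnd j i h h' : bnd i h -> reach j h h' -> bnd (i + j) h'.
Proof.
elim: j i h => [|j IH] i h /=.
  by rewrite addn0 => ? ->.
move=> Hb.
have step : forall h1, bnd i.+1 h1 -> reach j h1 h' -> bnd (i + j.+1) h'.
  by move=> h1 H1 R1; rewrite addnS -addSn; apply: IH H1 R1.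
case: h Hb => [[a b] c] /= [/andP[a1 a2] /andP[b1 b2] /andP[c1 c2]].
case=> [|[|[]]] H; apply: step H => /=; split; apply/andP; split; lia.
Qed.

Lemma intr_ZN_eq0 (N : nat) (z : int) : (1 < N)%N -> (`|z| < N)%N ->
  (z%:~R : 'Z_N) = 0 -> z = 0.
Proof.
move=> N1; case: z => m /= Hm.
  rewrite -pmulrn Zp_nat => /(congr1 val) /=.
  by rewrite Zp_cast // modn_small //= => ->.
move=> /eqP; rewrite NegzE intrN oppr_eq0 -pmulrn Zp_nat => /eqP /(congr1 val) /=.
by rewrite Zp_cast // modn_small.
Qed.

Theorem lemma4p1 (R : numFieldType) (n : nat) (hn : (0 < n)%N) (k : nat)
  (hk : (k <= n)%N) :
  ip_delta_e_int (iter k (@lap int R) (@delta_e int R)) =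
  ip_fin (iter k (@lap 'Z_(n ^ 2 + 1) R) (@delta_e 'Z_(n ^ 2 + 1) R))
         (@delta_e 'Z_(n ^ 2 + 1) R).
Proof.
set N := (n ^ 2 + 1)%N.
have N1 : (1 < N)%N by rewrite /N; nia.
rewrite /ip_fin (bigD1 (he _)) //= big1 ?addr0; last first.
  by move=> h /negbTE Hh; rewrite /delta_e Hh mulr0.
rewrite /delta_e eqxx mulr1 /ip_delta_e_int -(phi_he N) pullback.
apply: locality => h' Hr.
have : bnd (0 + k) h' by apply: reach_bnd Hr; rewrite /bnd /=; split; lia.
rewrite add0n.
case: h' {Hr} => [[a b] c] /= [/andP[a1 a2] /andP[b1 b2] /andP[c1 c2]].
case: ifP => [/eqP [-> -> ->] | ne]; first by rewrite eqxx.
case: ifP => // /eqP [Ha Hb Hc]; move: ne.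
rewrite (intr_ZN_eq0 N1 _ Ha); last by rewrite /N; nia.
rewrite (intr_ZN_eq0 N1 _ Hb); last by rewrite /N; nia.
rewrite (intr_ZN_eq0 N1 _ Hc) ?eqxx //; rewrite /N; nia.
Qed.
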